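(* Let $n\ge1$ and let $\mathbb X$, $\mathbb Y$ be disjoint sets of variables with $|\mathbb X|=|\mathbb Y|=k>n$. Then the homotopy category of finitely generated graded matrix factorizations $\mathrm{HMF}(\mathrm{Sym}(\mathbb X|\mathbb Y),\Sigma\mathbb X^{n+1}-\Sigma\mathbb Y^{n+1})$ is trivial (every object is isomorphic to $0$).
   Context: $\mathrm{Sym}(\mathbb X|\mathbb Y)$ is the ring of complex polynomials in $\mathbb X\cup\mathbb Y$ symmetric in $\mathbb X$ and in $\mathbb Y$ separately, i.e. the polynomial ring in the elementary symmetric polynomials $X_1,\dots,X_k,Y_1,\dots,Y_k$, graded with variables of positive degree; $\Sigma\mathbb X^{n+1}=\sum_{x\in\mathbb X}x^{n+1}$. For a regular local graded ring $S$ and homogeneous $w$ of degree $d>0$ in the homogeneous maximal ideal, a graded matrix factorization of type $(S,w)$ is $M^0\xrightarrow fM^{-1}\xrightarrow gM^0$ with $M^0,M^{-1}$ finitely generated free graded modules, $f$ of degree $d$, $g$ of degree $0$, $gf=fg=w$; $\mathrm{HMF}(S,w)$ is the category of these modulo homotopy (null-homotopies $D^0:M^0\to N^{-1}$ of degree $0$, $D^{-1}:M^{-1}\to N^0$ of degree $-d$ with $g'D^0+D^{-1}f=\alpha$, $f'D^{-1}+D^0g=\beta$). *)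

(* Defs.v *)
From mathcomp Require Import all_boot all_algebra.
From mathcomp Require Import complex.
From mathcomp Require Import Rstruct.
From mathcomp Require Import mpoly.
Set Implicit Arguments. Unset Strict Implicit. Unset Printing Implicit Defensive.
Import GRing.Theory.
Local Open Scope ring_scope.

Definition CC : fieldType := (Rdefinitions.R)[i].

(* Used twice:
   - as Sym(X|Y) = C[X_1..X_k, Y_1..Y_k] (X_{i+1} = 'X_(lshift k i),
     Y_{i+1} = 'X_(rshift k i)), the polynomial ring in the elementary
     symmetric polynomials;
   - as C[x_1..x_k, y_1..y_k], the ring of the actual variables of X and Y. *)
Definition Pol (k : nat) := {mpoly CC[k + k]}.

(* Grading of Sym(X|Y): deg x = deg y = 2, hence deg X_j = deg Y_j = 2j. *)
Definition wt (k : nat) (j : 'I_(k + k)) : nat :=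
  match split j with inl i => 2 * i.+1 | inr i => 2 * i.+1 end.

Definition wdeg (k : nat) (m : 'X_{1.. k + k}) : nat :=
  \sum_(j < k + k) wt j * m j.

(* p is homogeneous of degree e (0 is homogeneous of every degree). *)
Definition whomog (k : nat) (e : int) (p : Pol k) : bool :=
  all (fun m => (wdeg m)%:Z == e) (msupp p).

Definition eX (k j : nat) : Pol k :=
  \sum_(h : {set 'I_k} | #|h| == j) \prod_(i in h) 'X_(lshift k i).
Definition eY (k j : nat) : Pol k :=
  \sum_(h : {set 'I_k} | #|h| == j) \prod_(i in h) 'X_(rshift k i).

Definition esym_tuple (k : nat) : (k + k).-tuple (Pol k) :=
  [tuple match split j with inl i => eX k i.+1 | inr i => eY k i.+1 end
   | j < k + k].

Definition psum_diff (k m : nat) : Pol k :=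
  \sum_(i < k) 'X_(lshift k i) ^+ m - \sum_(i < k) 'X_(rshift k i) ^+ m.

(* finitely generated free graded module  (+)_j S(-gdeg j):
   generator j has degree gdeg j. *)
Record gfree := GFree { grk : nat; gdeg : 'I_grk -> int }.

(* a matrix A : M -> N (acting on column vectors) is a graded homomorphism
   of degree e *)
Definition hom_of_deg (k : nat) (e : int) (M N : gfree)
  (A : 'M[Pol k]_(grk N, grk M)) : Prop :=
  forall (i : 'I_(grk N)) (j : 'I_(grk M)), whomog (gdeg j + e - gdeg i) (A i j).

Arguments hom_of_deg {k} e M N A.

(* graded matrix factorizations M^0 --f--> M^{-1} --g--> M^0 of type (S, w),
   w of degree d *)
Record gmf (k : nat) (w : Pol k) (d : int) := GMF {
  mf0 : gfree;
  mf1 : gfree;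
  mf_f : 'M[Pol k]_(grk mf1, grk mf0);
  mf_g : 'M[Pol k]_(grk mf0, grk mf1);
  mf_f_deg : hom_of_deg d mf0 mf1 mf_f;
  mf_g_deg : hom_of_deg 0 mf1 mf0 mf_g;
  mf_gf : mf_g *m mf_f = w%:M;
  mf_fg : mf_f *m mf_g = w%:M }.

Definition is_mf_mor (k : nat) (w : Pol k) (d : int) (M N : gmf w d)
  (a : 'M[Pol k]_(grk (mf0 N), grk (mf0 M)))
  (b : 'M[Pol k]_(grk (mf1 N), grk (mf1 M))) : Prop :=
  [/\ hom_of_deg 0 (mf0 M) (mf0 N) a, hom_of_deg 0 (mf1 M) (mf1 N) b,
      mf_f N *m a = b *m mf_f M & mf_g N *m b = a *m mf_g M].

Arguments is_mf_mor {k w d} M N a b.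

Definition mf_homotopic (k : nat) (w : Pol k) (d : int) (M N : gmf w d)
  (a a' : 'M[Pol k]_(grk (mf0 N), grk (mf0 M)))
  (b b' : 'M[Pol k]_(grk (mf1 N), grk (mf1 M))) : Prop :=
  exists (D0 : 'M[Pol k]_(grk (mf1 N), grk (mf0 M)))
         (D1 : 'M[Pol k]_(grk (mf0 N), grk (mf1 M))),
  [/\ hom_of_deg 0 (mf0 M) (mf1 N) D0, hom_of_deg (- d) (mf1 M) (mf0 N) D1,
      a - a' = mf_g N *m D0 + D1 *m mf_f M &
      b - b' = mf_f N *m D1 + D0 *m mf_g M].

Arguments mf_homotopic {k w d} M N a a' b b'.

Definition hmf_iso (k : nat) (w : Pol k) (d : int) (M N : gmf w d) : Prop :=
  exists a b a' b',
  [/\ is_mf_mor M N a b, is_mf_mor N M a' b',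
      mf_homotopic M M (a' *m a) 1%:M (b' *m b) 1%:M &
      mf_homotopic N N (a *m a') 1%:M (b *m b') 1%:M].

Arguments hmf_iso {k w d} M N.

Definition gfree0 : gfree := GFree (fun _ : 'I_0 => 0%:Z).

Lemma hom_of_deg0 (k : nat) (e : int) (A : 'M[Pol k]_(0, 0)) :
  hom_of_deg e gfree0 gfree0 A.
Proof. by move=> [] //. Qed.

Lemma mx00_eq (k : nat) (A B : 'M[Pol k]_(0, 0)) : A = B.
Proof. by apply/matrixP => -[]. Qed.

Definition gmf0 (k : nat) (w : Pol k) (d : int) : gmf w d :=
  @GMF k w d gfree0 gfree0 0 0 (hom_of_deg0 _ _) (hom_of_deg0 _ _)
    (mx00_eq _ _) (mx00_eq _ _).

(* Main.v *)
Require Import Defs.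
From mathcomp Require Import all_boot all_algebra.
From mathcomp Require Import complex.
From mathcomp Require Import Rstruct.
From mathcomp Require Import mpoly.
From mathcomp Require Import zify.
Import GRing.Theory.
Local Open Scope ring_scope.

Lemma split_l k (i : 'I_k) : split (lshift k i) = inl i.
Proof. by rewrite -[lshift k i]/(unsplit (inl i)) unsplitK. Qed.
Lemma split_r k (i : 'I_k) : split (rshift k i) = inr i.
Proof. by rewrite -[rshift k i]/(unsplit (inr i)) unsplitK. Qed.

Lemma whomogP k e (p : Pol k) :
  reflect (forall m, p@_m != 0 -> (wdeg m)%:Z = e) (whomog e p).
Proof.
apply: (iffP allP) => H m.
- by move=> nz; apply/eqP; apply: H; rewrite mcoeff_msupp.
- by move=> ms; apply/eqP/H; rewrite -mcoeff_msupp.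
Qed.

Lemma wdegD k (m1 m2 : 'X_{1.. k + k}) : wdeg (m1 + m2)%MM = (wdeg m1 + wdeg m2)%N.
Proof. by rewrite /wdeg -big_split; apply: eq_bigr => j _; rewrite mnmDE mulnDr. Qed.

Lemma wdegU k (j : 'I_(k + k)) : wdeg U_(j)%MM = wt j.
Proof.
rewrite /wdeg (bigD1 j) //= mnm1E eqxx muln1 big1 ?addn0 // => i /negbTE.
by rewrite mnm1E eq_sym => ->; rewrite muln0.
Qed.

Lemma wt_gt0 k (j : 'I_(k + k)) : (0 < wt j)%N.
Proof. by rewrite /wt; case: split. Qed.

Lemma wdeg_eq0 k (m : 'X_{1.. k + k}) : wdeg m = 0%N -> m = 0%MM.
Proof.
move/eqP; rewrite /wdeg sum_nat_eq0 => /forallP H; apply/mnmP => j.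
have := H j; rewrite /= muln_eq0 mnm0E; case/orP=> /eqP h.
  by have := @wt_gt0 k j; rewrite h.
exact: h.
Qed.

Lemma whomog0 k e : whomog e (0 : Pol k).
Proof. by apply/whomogP => m; rewrite mcoeff0 eqxx. Qed.

Lemma whomogD k e (p q : Pol k) : whomog e p -> whomog e q -> whomog e (p + q).
Proof.
move=> /whomogP hp /whomogP hq; apply/whomogP => m; rewrite mcoeffD.
by case: (p@_m =P 0) => [->|/eqP /hp //]; rewrite add0r => /hq.
Qed.

Lemma whomog_sum k e (I : Type) (r : seq I) (P : pred I) (F : I -> Pol k) :
  (forall i, P i -> whomog e (F i)) -> whomog e (\sum_(i <- r | P i) F i).
Proof.
move=> H; apply: (big_ind (whomog e)) => //; [exact: whomog0 | exact: whomogD].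
Qed.

Lemma whomogM k e1 e2 (p q : Pol k) :
  whomog e1 p -> whomog e2 q -> whomog (e1 + e2) (p * q).
Proof.
move=> /allP hp /allP hq; apply/allP => m /msuppM_le /allpairsP [[m1 m2] [/= h1 h2 ->]].
by rewrite wdegD PoszD; move: (hp _ h1) (hq _ h2) => /eqP -> /eqP ->.
Qed.

Lemma whomogCM k e c (p : Pol k) : whomog e p -> whomog e (c%:MP * p).
Proof.
move=> /whomogP hp; apply/whomogP => m; rewrite mcoeffCM.
by case: (p@_m =P 0) => [->|/eqP /hp //]; rewrite mulr0 eqxx.
Qed.

Lemma whomog_deriv k e (i : 'I_(k + k)) (p : Pol k) :
  whomog e p -> whomog (e - (wt i)%:Z) (mderiv i p).
Proof.
move=> /whomogP hp; apply/whomogP => m; rewrite mcoeff_mderiv.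
case: (p@_(m + U_(i)) =P 0) => [->|/eqP /hp]; first by rewrite mul0rn eqxx.
by rewrite wdegD wdegU PoszD => <- _; rewrite addrK.
Qed.

Lemma map_mx_derM {k} (i : 'I_(k + k)) p q r (A : 'M[Pol k]_(p, q)) (B : 'M_(q, r)) :
  map_mx (mderiv i) (A *m B) = map_mx (mderiv i) A *m B + A *m map_mx (mderiv i) B.
Proof.
apply/matrixP => x y; rewrite !mxE raddf_sum -big_split; apply: eq_bigr => z _.
rewrite !mxE; exact: mderivM.
Qed.

Lemma map_mx_derC {k} (i : 'I_(k + k)) p (w : Pol k) :
  map_mx (mderiv i) (w%:M : 'M_p) = (mderiv i w)%:M.
Proof. by apply/matrixP => x y; rewrite !mxE mderivMn. Qed.

Lemma hom_deriv {k} (i : 'I_(k + k)) e (M N : gfree) (A : 'M[Pol k]_(grk N, grk M)) c :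
  hom_of_deg e M N A -> hom_of_deg (e - (wt i)%:Z) M N (c%:MP *: map_mx (mderiv i) A).
Proof.
move=> hA x y; rewrite !mxE; apply: whomogCM.
have -> : gdeg y + (e - (wt i)%:Z) - gdeg x = gdeg y + e - gdeg x - (wt i)%:Z.
  by rewrite addrA [_ - _ - gdeg x]addrAC.
exact/whomog_deriv/hA.
Qed.

Lemma contract k (w : Pol k) (d : int) (M : gmf w d) (i : 'I_(k + k)) (a : CC) :
  d = (wt i)%:Z -> a != 0 -> mderiv i w = a%:MP -> hmf_iso M (gmf0 w d).
Proof.
move=> hd ha hD.
exists 0, 0, 0, 0; split.
- split; first (by move=> []); first (by move=> []); by rewrite mulmx0 mul0mx.
- split; first (by move=> x []); first (by move=> x []); by rewrite mulmx0 mul0mx.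
- pose c : CC := - a^-1.
  have hc : c%:MP * a%:MP = -1 :> Pol k by rewrite -mpolyCM mulNr mulVf // mpolyCN.
  pose D0 : 'M[Pol k]_(grk (Defs.mf1 M), grk (Defs.mf0 M)) := c%:MP *: map_mx (mderiv i) (mf_f M).
  pose D1 : 'M[Pol k]_(grk (Defs.mf0 M), grk (Defs.mf1 M)) := c%:MP *: map_mx (mderiv i) (mf_g M).
  exists D0, D1; split.
  + have := @hom_deriv k i _ _ _ _ c (@mf_f_deg _ _ _ M); rewrite (_ : d - _ = 0) //; by rewrite hd subrr.
  + have := @hom_deriv k i _ _ _ _ c (@mf_g_deg _ _ _ M); rewrite (_ : 0 - _ = - d) //; by rewrite hd sub0r.
  + rewrite /D0 /D1 mulmx0 sub0r -scalemxAr -scalemxAl -scalerDr addrC -map_mx_derM mf_gf.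
    by rewrite map_mx_derC hD scale_scalar_mx hc raddfN.
  + rewrite /D0 /D1 mulmx0 sub0r -scalemxAr -scalemxAl -scalerDr addrC -map_mx_derM mf_fg.
    by rewrite map_mx_derC hD scale_scalar_mx hc raddfN.
- exists 0, 0; split; try by move=> [].
  + by apply/matrixP => -[].
  + by apply/matrixP => -[].
Qed.

Lemma deriv_const {k} (i : 'I_(k + k)) (w : Pol k) :
  whomog (wt i)%:Z w -> mderiv i w = (w@_U_(i))%:MP.
Proof.
move=> /whomogP hw; apply/mpolyP => m; rewrite mcoeff_mderiv mcoeffC.
case: (m =P 0%MM) => [->|/eqP nz]; first by rewrite add0m mnm0E mulr1.
rewrite mulr0; case: (w@_(m + U_(i)) =P 0) => [->|/eqP /hw]; first by rewrite mul0rn.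
rewrite wdegD wdegU => /eqP; rewrite eqz_nat -{2}[wt i]add0n eqn_add2r => /eqP /wdeg_eq0.
by move=> h; move: nz; rewrite h eqxx.
Qed.

Lemma roots_exist n : exists rs : seq CC, [/\ size rs = n.+1,
  (forall z, z \in rs -> z ^+ n.+1 = 1) &
  \prod_(z <- rs) ('X - z%:P) = 'X^(n.+1) - 1%:P].
Proof.
have [rs hrs] := closed_field_poly_normal ('X^(n.+1) - 1%:P : {poly CC}).
rewrite lead_coefXnsubC // scale1r in hrs.
exists rs; split => //.
- by have := size_XnsubC (1 : CC) (ltn0Sn n); rewrite hrs size_prod_XsubC => -[].
- move=> z; rewrite -root_prod_XsubC -hrs /root !hornerE subr_eq0 => /eqP.
  done.
Qed.

Lemma big_nth_split (R : Type) (idx : R) (op : Monoid.com_law idx) k (rs : seq CC)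
  (F : CC -> R) : (size rs <= k)%N ->
  \big[op/idx]_(i < k) F (nth 0 rs i) =
  op (\big[op/idx]_(z <- rs) F z) (\big[op/idx]_(size rs <= i < k) F 0).
Proof.
move=> hs.
rewrite -(big_mkord xpredT (fun i => F (nth 0 rs i))) (big_cat_nat (leq0n (size rs)) hs) /=.
have -> : \big[op/idx]_(z <- rs) F z = \big[op/idx]_(z <- mkseq (nth 0 rs) (size rs)) F z.
  by rewrite mkseq_nth.
rewrite /mkseq big_map /index_iota subn0; congr (op _ _).
by apply: eq_big_nat => i /andP[hi _]; rewrite nth_default.
Qed.

Definition vals k (rs : seq CC) : 'I_(k + k) -> CC :=
  fun x => match split x with inl i => nth 0 rs i | inr _ => 0 end.

Definition cst k (rs : seq CC) : k.-tuple CC := [tuple nth 0 rs i | i < k].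

Lemma meval_eX k rs j : (eX k j).@[vals k rs] = (mesym k CC j).@[tnth (cst k rs)].
Proof.
rewrite /eX /mesym !(big_morph _ (mevalD _) (meval0 _)); apply: eq_bigr => h _.
rewrite !(big_morph _ (mevalM _) (meval1 _)); apply: eq_bigr => i _.
by rewrite !mevalXU /vals split_l tnth_mktuple.
Qed.

Lemma meval_eY k rs j : (eY k j.+1).@[vals k rs] = 0.
Proof.
rewrite /eY (big_morph _ (mevalD _) (meval0 _)); apply: big1 => h /eqP hh.
have /card_gt0P [i hi] : (0 < #|h|)%N by rewrite hh.
by rewrite (big_morph _ (mevalM _) (meval1 _)) (bigD1 i) //= mevalXU /vals split_r mul0r.
Qed.

Lemma prod_cs n k rs : size rs = n.+1 -> (n < k)%N ->
  \prod_(z <- rs) ('X - z%:P) = 'X^(n.+1) - 1%:P ->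
  \prod_(c <- cst k rs) ('X - c%:P) = ('X^(n.+1) - 1%:P) * 'X^(k - n.+1).
Proof.
move=> hs hk hp.
rewrite big_tuple (eq_bigr (fun i : 'I_k => 'X - (nth 0 rs i)%:P)); last first.
  by move=> i _; rewrite tnth_mktuple.
rewrite (@big_nth_split _ _ *%R k rs (fun z => 'X - z%:P)); last by rewrite hs.
by rewrite hp hs polyC0 subr0 prodr_const_nat.
Qed.

Lemma esym_zero n k rs (j : nat) : size rs = n.+1 -> (n < k)%N ->
  \prod_(z <- rs) ('X - z%:P) = 'X^(n.+1) - 1%:P ->
  (0 < j)%N -> (j <= n)%N -> (mesym k CC j).@[tnth (cst k rs)] = 0.
Proof.
move=> hs hk hp hj0 hjn.
have hjk : (j < k.+1)%N by lia.
have := mroots_coeff (cst k rs) (Ordinal hjk); rewrite (@prod_cs n k rs hs hk hp) /=.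
rewrite mulrBl mul1r -exprD coefB !coefXn.
have -> : (k - j == n.+1 + (k - n.+1))%N = false by apply/negbTE; lia.
have -> : (k - j == k - n.+1)%N = false by apply/negbTE; lia.
rewrite subrr => /esym /eqP; rewrite mulf_eq0 expf_eq0 oppr_eq0 oner_eq0 andbF /=.
by move/eqP.
Qed.

Lemma mevalXn n (v : 'I_n -> CC) (p : {mpoly CC[n]}) e : (p ^+ e).@[v] = p.@[v] ^+ e.
Proof. elim: e => [|e ih]; first by rewrite !expr0 meval1.
by rewrite !exprS mevalM ih. Qed.


Lemma meval_sum n (v : 'I_n -> CC) (I : finType) (F : I -> {mpoly CC[n]}) :
  (\sum_i F i).@[v] = \sum_i (F i).@[v].
Proof. exact: (big_morph _ (mevalD v) (meval0 v)). Qed.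

Lemma meval_psum_gen k (v : 'I_(k + k) -> CC) e :
  (psum_diff k e).@[v] = \sum_i v (lshift k i) ^+ e - \sum_i v (rshift k i) ^+ e.
Proof.
rewrite /psum_diff mevalB !meval_sum.
by congr (_ - _); apply: eq_bigr => i _; rewrite mevalXn mevalXU.
Qed.

Lemma meval_psum n k rs (v : 'I_(k + k) -> CC) : size rs = n.+1 -> (n < k)%N ->
  (forall z, z \in rs -> z ^+ n.+1 = 1) ->
  (forall i, v (lshift k i) = nth 0 rs i) -> (forall i, v (rshift k i) = 0) ->
  (psum_diff k n.+1).@[v] = n.+1%:R.
Proof.
move=> hs hk hr hl hr0.
rewrite meval_psum_gen.
rewrite [X in _ - X]big1 ?subr0; last first.
  by move=> i _; rewrite hr0 exprS; apply: mul0r.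
rewrite (eq_bigr (fun i : 'I_k => (nth 0 rs i) ^+ n.+1)); last first.
  by move=> i _; rewrite hl.
rewrite (@big_nth_split _ _ +%R k rs (fun z => z ^+ n.+1)); last by rewrite hs.
have Z : \sum_(n.+1 <= i < k) ((0:CC) ^+ n.+1) = 0.
  by rewrite big1 // => i _; rewrite exprS; apply: mul0r.
rewrite hs Z /= addr0.
rewrite (eq_big_seq (fun _ => 1)) //.
by rewrite -hs -sum1_size natr_sum.
Qed.

Definition smallv n {k} (j : 'I_(k + k)) : bool :=
  match split j with inl i => (i < n)%N | inr _ => true end.

Lemma comb n k (hnk : (n < k)%N) (m : 'X_{1.. k + k}) :
  wdeg m = (2 * n.+1)%N -> m != U_(lshift k (Ordinal hnk))%MM ->
  exists j, (0 < m j)%N /\ smallv n j.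
Proof.
move=> hw hne.
case: (boolP [exists j, (0 < m j)%N && smallv n j]) => [/existsP [j /andP[h1 h2]]|/existsPn H].
  by exists j.
exfalso; move/negP: hne; apply.
case: (boolP [exists j, (0 < m j)%N]) => [/existsP [j0 hj0]|/existsPn H0]; last first.
  have m0 : m = 0%MM by apply/mnmP => j; rewrite mnm0E; move: (H0 j); rewrite lt0n negbK => /eqP.
  by move: hw; rewrite m0 /wdeg big1 // => j _; rewrite mnm0E muln0.
have := H j0; rewrite hj0 /= /smallv.
case E: (split j0) => [i|i] //; rewrite -leqNgt => hni.
have hj : j0 = lshift k i by rewrite -(splitK j0) E.
move: hw; rewrite /wdeg (bigD1 j0) //= {1}/wt E => hw.
have hle : (2 * i.+1 <= 2 * i.+1 * m j0)%N by rewrite leq_pmulr.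
have hi : (i : nat) = n by lia.
have hm1 : m j0 = 1%N.
  apply/eqP; rewrite eqn_leq hj0 andbT leqNgt; apply/negP => h.
  have : (2 * i.+1 * 2 <= 2 * i.+1 * m j0)%N by rewrite leq_mul2l h orbT.
  lia.
have hrest : (\sum_(j < k + k | j != j0) wt j * m j = 0)%N.
  by move: hw; rewrite hm1 hi muln1 => /eqP; rewrite -{2}[(2 * n.+1)%N]addn0 eqn_add2l => /eqP.
move/eqP: hrest; rewrite sum_nat_eq0 => /forallP hrest.
have hL : lshift k (Ordinal hnk) = j0 by apply/val_inj; rewrite hj /= hi.
apply/eqP/mnmP => j; rewrite mnm1E hL.
case: (eqVneq j0 j) => [<-|hne']; first by rewrite hm1.
have := hrest j; rewrite eq_sym hne' /= muln_eq0 => /orP[/eqP h|/eqP //].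
by have := @wt_gt0 k j; rewrite h.
Qed.

Lemma key n k (hnk : (n < k)%N) (w : Pol k) :
  w \mPo esym_tuple k = psum_diff k n.+1 -> whomog (2 * n.+1)%:Z w ->
  w@_U_(lshift k (Ordinal hnk)) != 0.
Proof.
move=> hw hh; apply/negP => /eqP h0.
have [rs [hs hr hp]] := roots_exist n.
have hu : forall j, smallv n j -> (tnth (esym_tuple k) j).@[vals k rs] = 0.
  move=> j; rewrite /smallv tnth_mktuple; case: (split j) => i hi.
  - by rewrite meval_eX (@esym_zero n k rs i.+1 hs hnk hp (ltn0Sn _) hi).
  - exact: meval_eY.
have hl : forall i, vals k rs (lshift k i) = nth 0 rs i by move=> i; rewrite /vals split_l.
have hr0 : forall i, vals k rs (rshift k i) = 0 by move=> i; rewrite /vals split_r.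
move: (vals k rs) hu hl hr0 => v hu hl hr0.
have := congr1 (meval v) hw.
rewrite comp_mpoly_meval (@meval_psum n k rs v hs hnk hr hl hr0) mevalE big1_seq.
  by move/eqP; rewrite eq_sym Num.Theory.pnatr_eq0.
move=> m /andP[_ hm].
have hwm : wdeg m = (2 * n.+1)%N by move/allP: hh => /(_ m hm) /eqP [].
case: (eqVneq m U_(lshift k (Ordinal hnk))%MM) => [->|hne]; first by rewrite h0 mul0r.
have [j [hj hs']] := @comb n k hnk m hwm hne.
by rewrite (bigD1 j) //= hu // -(prednK hj) exprS !mul0r mulr0.
Qed.

Lemma homog_of_M k (w : Pol k) (d : int) (M : gmf w d) :
  ((0 < grk (Defs.mf0 M)) || (0 < grk (Defs.mf1 M)))%N -> whomog d w.
Proof.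
case/orP => [h|h].
- have x : 'I_(grk (Defs.mf0 M)) by exact: (Ordinal h).
  have := @mf_gf _ _ _ M; move/matrixP => /(_ x x); rewrite !mxE eqxx mulr1n => <-.
  apply: whomog_sum => l _.
  have := @whomogM _ _ _ _ _ (@mf_g_deg _ _ _ M x l) (@mf_f_deg _ _ _ M l x).
  by rewrite (_ : _ + _ = d) //; lia.
- have x : 'I_(grk (Defs.mf1 M)) by exact: (Ordinal h).
  have := @mf_fg _ _ _ M; move/matrixP => /(_ x x); rewrite !mxE eqxx mulr1n => <-.
  apply: whomog_sum => l _.
  have := @whomogM _ _ _ _ _ (@mf_f_deg _ _ _ M x l) (@mf_g_deg _ _ _ M l x).
  by rewrite (_ : _ + _ = d) //; lia.
Qed.

Lemma mx_nil k p q (A B : 'M[Pol k]_(p, q)) : p = 0%N -> A = B.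
Proof. by move=> hp; apply/matrixP => i; have := ltn_ord i; rewrite {2}hp. Qed.

Lemma trivial_iso k (w : Pol k) (d : int) (M : gmf w d) :
  grk (Defs.mf0 M) = 0%N -> grk (Defs.mf1 M) = 0%N -> hmf_iso M (gmf0 w d).
Proof.
move=> h0 h1.
exists 0, 0, 0, 0; split.
- split; first (by move=> []); first (by move=> []); by rewrite mulmx0 mul0mx.
- split; first (by move=> x []); first (by move=> x []); by rewrite mulmx0 mul0mx.
- exists 0, 0; split.
  + by move=> i j; rewrite mxE; exact: whomog0.
  + by move=> i j; rewrite mxE; exact: whomog0.
  + exact: mx_nil.
  + exact: mx_nil.
- exists 0, 0; split; try by move=> [].
  + by apply/matrixP => -[].
  + by apply/matrixP => -[].
Qed.

Theorem proposition3p4p5 (n k : nat) (hn : (1 <= n)%N) (hnk : (n < k)%N)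
  (w : Pol k) (hw : w \mPo esym_tuple k = psum_diff k n.+1)
  (M : gmf w (2 * n.+1)%:Z) :
  hmf_iso M (gmf0 w (2 * n.+1)%:Z).
Proof.
have hwt : (2 * n.+1)%:Z = (wt (lshift k (Ordinal hnk)))%:Z by rewrite /wt split_l.
case: (boolP ((0 < grk (Defs.mf0 M)) || (0 < grk (Defs.mf1 M)))%N) => [hpos|hz].
- have hh : whomog (2 * n.+1)%:Z w := @homog_of_M _ _ _ M hpos.
  have ha := @key n k hnk w hw hh.
  apply: (@contract k w _ M _ _ hwt ha); apply: deriv_const; rewrite -hwt; exact: hh.
- move: hz; rewrite negb_or -!eqn0Ngt => /andP[/eqP h0 /eqP h1].
  exact: trivial_iso.
Qed.
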